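(* Let $G$ be a connected finite simple graph. If $G$ has a cut-vertex, then $\alpha^*(G)\geq 2$.
   Context: An independent set $I$ of $G$ is light if $\sum_{u\in I}d_G(u)\le |V(G)|-1$; $\alpha^*(G)$ is the maximum size of a light independent set of $G$. *)

(* Defs.v *)
From mathcomp Require Import all_boot.
Set Implicit Arguments. Unset Strict Implicit. Unset Printing Implicit Defensive.

Definition simple_graph (T : finType) (e : rel T) : Prop :=
  symmetric e /\ irreflexive e.

Definition deg (T : finType) (e : rel T) (x : T) : nat := #|[set y | e x y]|.

Definition connected_graph (T : finType) (e : rel T) : Prop :=
  forall x y : T, connect e x y.

Definition del_vertex (T : finType) (e : rel T) (v : T) : rel T :=
  [rel a b | [&& e a b, a != v & b != v]].

Definition cut_vertex (T : finType) (e : rel T) (v : T) : Prop :=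
  exists x y : T, [/\ x != v, y != v & ~~ connect (del_vertex e v) x y].

Definition independent (T : finType) (e : rel T) (I : {set T}) : bool :=
  [forall x in I, forall y in I, ~~ e x y].

Definition light (T : finType) (e : rel T) (I : {set T}) : bool :=
  independent e I && (\sum_(u in I) deg e u <= #|T| - 1).

Definition alpha_star (T : finType) (e : rel T) : nat :=
  \max_(I : {set T} | light e I) #|I|.

(* Main.v *)
Require Import Defs.
From mathcomp Require Import all_boot.
From mathcomp Require Import zify.

Theorem lemma2p3 (T : finType) (e : rel T) :
  simple_graph e -> connected_graph e -> (exists v : T, cut_vertex e v) ->
  2 <= alpha_star e.
Proof.
move=> [esym eirr] _ [v [x [y [xv yv nxy]]]].
set E := del_vertex e v.
set C := [set z | connect E x z].
have xC : x \in C by rewrite inE connect0.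
have yC : y \notin C by rewrite inE.
have xy : x != y by apply: contraNneq yC => <-.
have vC : v \notin C.
  rewrite inE; apply/negP => /connectP [p].
  move: (x) xv; elim: p => [|a p IH] z zv /=; first by move=> _ hv; move: zv; rewrite hv eqxx.
  by move=> /andP [/and3P [_ _ av] pp] hl; apply: (IH a av pp hl).
have Exy : ~~ e x y.
  apply/negP => hxy; move/negP: nxy; apply; apply: connect1.
  by rewrite /E /del_vertex /= hxy xv yv.
have ind : independent e [set x; y].
  apply/forallP => a; apply/implyP => ha; apply/forallP => b; apply/implyP => hb.
  move: ha hb; rewrite !inE => /orP [] /eqP -> /orP [] /eqP ->;
    rewrite ?eirr //; by rewrite esym.
have dx : deg e x <= #|C|.
  have sub : [set z | e x z] \subset v |: (C :\ x).
    apply/subsetP => z; rewrite !inE => hz.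
    case: (eqVneq z v) => //= zv.
    apply/andP; split; first by apply: contraTneq hz => ->; rewrite eirr.
    apply: connect1; by rewrite /E /del_vertex /= hz xv zv.
  have := subset_leq_card sub; rewrite cardsU1 (cardsD1 x C) xC /deg.
  case: (v \notin _) => /=; lia.
have dy : deg e y <= #|T| - #|C| - 1.
  have sub : [set z | e y z] \subset (~: C) :\ y.
    apply/subsetP => z; rewrite !inE => hz.
    apply/andP; split; first by apply: contraTneq hz => ->; rewrite eirr.
    case: (eqVneq z v) => [->|zv]; first by move: vC; rewrite inE.
    apply/negP => cz; move: yC; rewrite inE => /negP; apply.
    apply: connect_trans cz _; apply: connect1; by rewrite /E /del_vertex /= esym hz zv yv.
  have := subset_leq_card sub.
  have hc := cardsC C.
  have hd := cardsD1 y (~: C); rewrite inE yC /= in hd; rewrite /deg; lia.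
have lt : light e [set x; y].
  rewrite /light ind /= big_setU1 /= ?inE ?(negbTE xy) // big_set1.
  have : 0 < #|~: C| by apply/card_gt0P; exists y; rewrite inE.
  have := cardsC C. move: dx dy. set n := #|T|. lia.
have := @leq_bigmax_cond _ (light e) (fun I : {set T} => #|I|) _ lt.
by rewrite cards2 xy.
Qed.
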